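(* Let $p\ge1$, $\phi_1,\dots,\phi_p:\mathbb Z\to\mathbb C$ and $s\in\mathbb Z$. The $p$ functions $t\mapsto\xi^{(m)}_{t,s}$ ($1\le m\le p$), defined on $\mathbb Z_{s-p+1}=\{s-p+1,s-p+2,\dots\}$, form a fundamental set of solutions of the homogeneous equation $y_t=\sum_{l=1}^p\phi_l(t)y_{t-l}$ ($t\ge s+1$): they are solutions, they are linearly independent, and every solution $y:\mathbb Z_{s-p+1}\to\mathbb C$ of this equation is a linear combination of them.
   Context: Convention: $\phi_l(t)=0$ for $l>p$. For integers $t>s$ and $1\le m\le p$, $\Phi^{(m)}_{t,s}$ is the $(t-s)\times(t-s)$ lower Hessenberg matrix whose $(i,j)$ entry is: $\phi_{m+i-1}(s+i)$ if $j=1$; $-1$ if $j=i+1$; $\phi_{i-j+1}(s+i)$ if $2\le j\le i$; $0$ if $j>i+1$. For $t\ge s-p+1$: $\xi^{(m)}_{t,s}=\det\Phi^{(m)}_{t,s}$ if $t>s$; $\xi^{(m)}_{t,s}=1$ if $t=s-m+1$; $\xi^{(m)}_{t,s}=0$ if $s-p+1\le t\le s$, $t\ne s-m+1$. *)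

(* Defs.v *)
(* Complex numbers are modelled as  complex R  (= R[i])
   for an arbitrary  R : realType  (MathComp-Analysis reals). *)
From HB Require Import structures.
From mathcomp Require Import all_boot all_order all_algebra.
From mathcomp Require Import reals complex.
Set Implicit Arguments. Unset Strict Implicit. Unset Printing Implicit Defensive.
Import Order.TTheory GRing.Theory Num.Theory.
Local Open Scope ring_scope.

Section Defs.
Variables (C : comRingType) (p : nat).
(* phi : 'I_p -> int -> C,  phi i  represents  phi_{i+1} *)
Variable phi : 'I_p -> int -> C.

(* phi_l(t), with the convention phi_l = 0 for l > p (and for l = 0) *)
Definition phiL (l : nat) (t : int) : C :=
  match insub l.-1 with
  | Some i => if (0 < l)%N then phi i t else 0
  | None => 0
  end.

(* Phi^{(m)}_{t,s} with n = t - s; 0-indexed entries (i,j) correspond to the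
   paper's (i+1, j+1). *)
Definition PhiMat (m : nat) (s : int) (n : nat) : 'M[C]_n :=
  \matrix_(i < n, j < n)
    if j == 0%N :> nat then phiL (m + i) (s + (i.+1)%:Z)
    else if j == i.+1 :> nat then -1
    else if (j <= i)%N then phiL (i - j).+1 (s + (i.+1)%:Z)
    else 0.

(* xi^{(m)}_{t,s} (meaningful for t >= s - p + 1) *)
Definition xi (m : nat) (t s : int) : C :=
  if s < t then \det (PhiMat m s `|t - s|%N)
  else if t == s - m%:Z + 1 then 1 else 0.

Definition is_solution (s : int) (y : int -> C) : Prop :=
  forall t : int, s + 1 <= t ->
    y t = \sum_(1 <= l < p.+1) phiL l t * y (t - l%:Z).
End Defs.

(* Main.v *)
Require Import Defs.
From HB Require Import structures.
From mathcomp Require Import all_boot all_order all_algebra zify ring.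
From mathcomp Require Import reals complex.
Set Implicit Arguments. Unset Strict Implicit. Unset Printing Implicit Defensive.
Import Order.TTheory GRing.Theory Num.Theory.
Local Open Scope ring_scope.

Definition Hmat (C : comNzRingType) (f : nat -> nat -> C) n : 'M[C]_n :=
  \matrix_(i < n, j < n) f i j.

Lemma Hmat_det (C : comNzRingType) (N : nat) (f : nat -> nat -> C) :
  (forall i j, (j < N.+1)%N -> (i.+1 == j -> f i j = -1) /\ ((i.+1 < j)%N -> f i j = 0)) ->
  \det (Hmat f N.+1) = \sum_(k < N.+1) f N k * \det (Hmat f k).
Proof.
elim: N f => [|n IH] f Hf.
  by rewrite det_mx11 big_ord1 det_mx00 mulr1 /Hmat mxE.
rewrite (expand_det_col _ ord_max) !big_ord_recr /=.
rewrite big1 ?add0r; last first.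
  move=> i _; rewrite /Hmat mxE /=.
  rewrite (proj2 (Hf i n.+1 _)) ?mul0r //=; move: (ltn_ord i); lia.
have -> : Hmat f n.+2 (widen_ord (leqnSn n.+1) ord_max) ord_max = -1.
  by rewrite /Hmat mxE /=; apply: (proj1 (Hf _ _ _)).
rewrite /cofactor.
have -> : row' ord_max (col' ord_max (Hmat f n.+2)) = Hmat f n.+1.
  by apply/matrixP => i j; rewrite !mxE !lift_max.
set g := fun i j => if i == n then f n.+1 j else f i j.
have -> : row' (widen_ord (leqnSn n.+1) ord_max) (col' ord_max (Hmat f n.+2)) = Hmat g n.+1.
  apply/matrixP => i j; rewrite !mxE lift_max /g /= /bump /=.
  case: (leqP n i) => Hi.
    have /eqP -> : (val i == n) by rewrite eqn_leq Hi andbT -ltnS (ltn_ord i).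
    by rewrite eqxx.
  by rewrite (ltn_eqF Hi).
rewrite (IH g); last first.
  move=> i j Hj; rewrite /g; case: (i =P n) => [->|_].
    by split=> H; [move/eqP: H => H|]; exfalso; lia.
  by apply: Hf; lia.
have E : forall k : 'I_n.+1, \det (Hmat g k) = \det (Hmat f k).
  move=> k; congr (\det _); apply/matrixP => i j; rewrite !mxE /g.
  by rewrite ltn_eqF // (leq_trans (ltn_ord i)) // -ltnS.
rewrite (eq_bigr (fun k : 'I_n.+1 => f n.+1 k * \det (Hmat f k))); last by move=> k _; rewrite E /g eqxx.
have ee : forall a, (-1) ^+ (a + a) = 1 :> C.
  by move=> a; rewrite addnn -mul2n exprM sqrrN !expr1n.
rewrite /Hmat mxE /= addnS exprS ee ee mul1r.
rewrite big_ord_recr /=.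
ring.
Qed.

Definition FF (C : comNzRingType) (p : nat) (phi : 'I_p -> int -> C) (m : nat) (s : int) :=
  fun i j : nat => if j == 0%N then phiL phi (m + i) (s + (i.+1)%:Z)
    else if j == i.+1 then -1
    else if (j <= i)%N then phiL phi (i - j).+1 (s + (i.+1)%:Z)
    else 0.

Lemma PhiMatE (C : comNzRingType) (p : nat) (phi : 'I_p -> int -> C) m s n :
  PhiMat phi m s n = Hmat (FF phi m s) n.
Proof. by apply/matrixP => i j; rewrite !mxE. Qed.

Lemma phiL_gt (C : comNzRingType) (p : nat) (phi : 'I_p -> int -> C) l t :
  (p < l)%N -> phiL phi l t = 0.
Proof. by move=> H; rewrite /phiL insubF //; apply/negbTE; rewrite -leqNgt; lia. Qed.

Lemma xi_pos (C : comNzRingType) (p : nat) (phi : 'I_p -> int -> C) m s (j : nat) :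
  xi phi m (s + (j.+1)%:Z) s = \det (Hmat (FF phi m s) j.+1).
Proof.
rewrite /xi ifT; last by lia.
by rewrite PhiMatE addrAC subrr add0r absz_nat.
Qed.

Lemma xi_neg (C : comNzRingType) (p : nat) (phi : 'I_p -> int -> C) m s t :
  t <= s -> xi phi m t s = if t == s - m%:Z + 1 then 1 else 0.
Proof. by move=> H; rewrite /xi ifF //; apply/negbTE; rewrite -leNgt. Qed.

Lemma xi_rec (C : comNzRingType) (p : nat) (phi : 'I_p -> int -> C) m s t :
  (1 <= m <= p)%N -> s + 1 <= t ->
  xi phi m t s = \sum_(1 <= l < p.+1) phiL phi l t * xi phi m (t - l%:Z) s.
Proof.
move=> Hm Ht; move: t Ht.
move=> t0 Ht; have [N ->] : exists N : nat, t0 = s + (N.+1)%:Z.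
  by exists (`|t0 - s|%N.-1); lia.
set t := s + (N.+1)%:Z.
rewrite xi_pos Hmat_det; last first.
  move=> i j Hj; rewrite /FF; split=> H.
    by move/eqP: H => <-; rewrite /= eqxx.
  rewrite ifF; last by apply/negbTE; rewrite -lt0n; lia.
  rewrite ifF; last by apply/negbTE; rewrite neq_ltn H orbT.
  by rewrite ifF //; apply/negbTE; rewrite -ltnNge; lia.
rewrite big_ord_recl /= det_mx00 mulr1.
have E1 : \sum_(1 <= l < p.+1) phiL phi l t * xi phi m (t - l%:Z) s =
          \sum_(1 <= l < (N + p).+1) phiL phi l t * xi phi m (t - l%:Z) s.
  rewrite [RHS](big_cat_nat _ (n := p.+1)) //=; last by rewrite ltnS leq_addl.
  rewrite [X in _ = _ + X]big1_seq ?addr0 // => l /andP[_].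
  by rewrite mem_index_iota => /andP[H _]; rewrite phiL_gt ?mul0r.
rewrite E1 (big_cat_nat _ (n := N.+1)) //=; last by rewrite ltnS leq_addr.
have E2 : \sum_(N.+1 <= l < (N + p).+1) phiL phi l t * xi phi m (t - l%:Z) s =
          phiL phi (m + N) t.
  rewrite (eq_big_nat _ _ (F2 := fun l => if l == (N + m)%N then phiL phi (N+m) t else 0)).
    rewrite -(big_mkcond (fun i : nat => i == (N + m)%N) (fun _ => phiL phi (N + m) t)).
    rewrite big_nat1_eq ifT; first by rewrite addnC.
    case/andP: Hm => Hm1 Hm2; rewrite -[N.+1]addn1 leq_add2l Hm1 /=.
    by rewrite ltnS leq_add2l.
  move=> l Hl; rewrite xi_neg; last by rewrite /t; clear -Hl; lia.
  case: (l =P (N + m)%N) => [->|H].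
    by rewrite ifT ?mulr1 //; apply/eqP; rewrite /t; clear; lia.
  rewrite ifF ?mulr0 //; apply/negbTE/eqP => H'; apply: H; rewrite /t in H'; clear -H'; lia.
rewrite E2 addrC; congr (_ + _).
rewrite big_add1 /= big_nat_rev big_mkord; apply: eq_bigr => k _.
rewrite /FF /= add0n.
rewrite ifF; last by apply/negbTE; rewrite neq_ltn ltnS ltn_ord.
rewrite ifT; last by [].
rewrite -xi_pos; congr (_ * _); congr (xi _ _ _ _).
have := ltn_ord k; rewrite /t; clear; lia.
Qed.

Unset Implicit Arguments.
Set Strict Implicit.

Theorem proposition2 (R : realType) (p : nat) (hp : (1 <= p)%N)
    (phi : 'I_p -> int -> complex R) (s : int) :
  (* each xi^{(m)}_{., s}, 1 <= m <= p, solves the equation *)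
  (forall m : 'I_p, is_solution phi s (fun t => xi phi m.+1 t s))
  /\
  (* linear independence on Z_{s-p+1} *)
  (forall c : 'I_p -> complex R,
     (forall t : int, s - p%:Z + 1 <= t ->
        \sum_(m < p) c m * xi phi m.+1 t s = 0) ->
     forall m : 'I_p, c m = 0)
  /\
  (* every solution on Z_{s-p+1} is a linear combination *)
  (forall y : int -> complex R, is_solution phi s y ->
     exists c : 'I_p -> complex R,
       forall t : int, s - p%:Z + 1 <= t ->
         y t = \sum_(m < p) c m * xi phi m.+1 t s).
Proof.
have key : forall (c : 'I_p -> complex R) (m0 : 'I_p),
    \sum_(m < p) c m * xi phi m.+1 (s - (m0.+1)%:Z + 1) s = c m0.
  move=> c m0; rewrite (bigD1 m0) //= big1 ?addr0.
    by rewrite xi_neg ?eqxx ?mulr1 //; lia.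
  move=> j Hj; rewrite xi_neg; last by lia.
  rewrite ifF ?mulr0 //; apply/negbTE/eqP => H; move/eqP: Hj; apply.
  by apply: val_inj => /=; lia.
split.
  move=> m t Ht; apply: xi_rec => //; have := ltn_ord m; lia.
split.
  move=> c Hc m; rewrite -(key c m); apply: Hc.
  have := ltn_ord m; lia.
move=> y Hy; exists (fun m => y (s - (m.+1)%:Z + 1)).
have low : forall t, s - p%:Z + 1 <= t -> t <= s ->
    y t = \sum_(m < p) y (s - (m.+1)%:Z + 1) * xi phi m.+1 t s.
  move=> t H1 H2.
  have Hk : (`|s - t|%N < p)%N by lia.
  have -> : t = s - ((Ordinal Hk).+1)%:Z + 1 by rewrite /=; lia.
  by rewrite key.
have H : forall n : nat, forall t, s - p%:Z + 1 <= t -> t <= s - p%:Z + 1 + n%:Z ->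
    y t = \sum_(m < p) y (s - (m.+1)%:Z + 1) * xi phi m.+1 t s.
  elim=> [|n IH] t H1 H2.
    by apply: low => //; lia.
  case: (lerP t s) => Hts; first by apply: low.
  rewrite (Hy t); last by lia.
  transitivity (\sum_(1 <= l < p.+1) phiL phi l t *
     \sum_(m < p) y (s - (m.+1)%:Z + 1) * xi phi m.+1 (t - l%:Z) s).
    apply: eq_big_nat => l Hl; congr (_ * _); apply: IH; lia.
  rewrite [RHS](eq_bigr (fun m : 'I_p => \sum_(1 <= l < p.+1)
      y (s - (m.+1)%:Z + 1) * (phiL phi l t * xi phi m.+1 (t - l%:Z) s))); last first.
    by move=> m _; rewrite (@xi_rec _ _ phi m.+1 s t) ?mulr_sumr //; have := ltn_ord m; lia.
  rewrite exchange_big /=; apply: eq_bigr => l _; rewrite mulr_sumr.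
  by apply: eq_bigr => m _; rewrite mulrCA.
move=> t Ht /=; rewrite (H (absz (t - (s - p%:Z + 1))%R) t Ht) //; lia.
Qed.
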